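(* Let $\nu \geq 1$ and $\delta > 0$ be real numbers, let $s \geq 4$ be an even natural number, and let $A$ be a finite non-empty set of real numbers satisfying $E_s(A) = |A|^{2s - \nu}$ and $E_{s/2}(A) \leq |A|^{s - \nu + \delta}$. Then there exists $G \subseteq A^s$ such that \[ |G| > |A|^{s - \delta}/2 \quad \text{and} \quad |\Sigma(G)| \leq 4 |A|^{\nu}, \] where $\Sigma(G) = \{a_1 + \dots + a_s : (a_1, \dots, a_s) \in G\}$.
   Context: For a finite set $X$ of reals and $t \in \mathbb{N}$, $E_t(X) = |\{(x_1,\dots,x_{2t}) \in X^{2t} : x_1 + \dots + x_t = x_{t+1} + \dots + x_{2t}\}|$. *)

(* Defs.v *)
From mathcomp Require Import all_boot all_order all_algebra.
From mathcomp Require Import finmap.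
From mathcomp Require Import all_classical all_reals all_analysis.
Set Implicit Arguments. Unset Strict Implicit. Unset Printing Implicit Defensive.
Import Order.TTheory GRing.Theory Num.Theory.
Local Open Scope ring_scope.
Local Open Scope fset_scope.

(* Tuples in X^n are represented as finite functions 'I_n -> X, where the
   finite set X : {fset R} is viewed as a finType of its elements. *)

Definition energy (R : realType) (X : {fset R}) (t : nat) : nat :=
  #|[set x : {ffun 'I_(t + t) -> X} |
      \sum_(i < t) val (x (lshift t i)) == \sum_(i < t) val (x (rshift t i))]|.

Definition sumset (R : realType) (X : {fset R}) (s : nat)
  (G : {set {ffun 'I_s -> X}}) : {fset R} :=
  [fset (\sum_(i < s) val (g i)) | g : {ffun 'I_s -> X} in G].

(* Main.v *)
Require Import Defs.
From mathcomp Require Import all_boot all_order all_algebra.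
From mathcomp Require Import finmap.
From mathcomp Require Import all_classical all_reals all_analysis.
From mathcomp Require Import ring lra.
Import Order.TTheory GRing.Theory Num.Theory.
Local Open Scope ring_scope.
Local Open Scope fset_scope.
Lemma amgm_aux (R : realType) (a b : R) : 1 <= a -> 1 <= b -> 1 <= (b / a + a / b) / 2.
Proof.
move=> a1 b1.
have a0 : a != 0 by rewrite gt_eqF // (lt_le_trans ltr01).
have b0 : b != 0 by rewrite gt_eqF // (lt_le_trans ltr01).
rewrite -subr_ge0.
have -> : (b / a + a / b) / 2 - 1 = (a - b) ^+ 2 / (2 * a * b) by field; rewrite a0 b0.
apply: divr_ge0; first exact: sqr_ge0.
by rewrite !mulr_ge0 // (le_trans ler01).
Qed.

Set Implicit Arguments. Unset Strict Implicit.
Section S.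
Local Open Scope ring_scope.
Variables (R : realType) (A : {fset R}).
Lemma cardA : #|{: A}| = #|` A|.
Proof. by rewrite -finmap.cardfE. Qed.

Definition ts n (u : {ffun 'I_n -> A}) : R := \sum_(i<n) val (u i).
Definition cn n (y : R) : R := \sum_(u : {ffun 'I_n -> A}) (ts u == y)%:R.

Lemma card_setR (T : finType) (P : pred T) :
  (#|[set x | P x]|%:R : R) = \sum_x (P x)%:R.
Proof.
rewrite -sum1_card natr_sum big_mkcond /=; apply eq_bigr => x _.
by rewrite inE; case: (P x).
Qed.

Definition join n (p : {ffun 'I_n -> A} * {ffun 'I_n -> A}) : {ffun 'I_(n+n) -> A} :=
  [ffun k => match fintype.split k with inl i => p.1 i | inr j => p.2 j end].
Definition unj n (x : {ffun 'I_(n+n) -> A}) : {ffun 'I_n -> A} * {ffun 'I_n -> A} :=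
  ([ffun i => x (lshift n i)], [ffun i => x (rshift n i)]).

Lemma joinK n : cancel (@join n) (@unj n).
Proof.
case=> u v; rewrite /unj /join; congr (_, _); apply/ffunP => i; rewrite !ffunE.
  by rewrite (unsplitK (inl i)).
by rewrite (unsplitK (inr i)).
Qed.
Lemma unjK n : cancel (@unj n) (@join n).
Proof.
move=> x; apply/ffunP => k; rewrite /unj /join !ffunE.
by rewrite -{2}(fintype.splitK k); case: (fintype.split k) => i /=; rewrite ffunE.
Qed.

Lemma split_sum n (F : R -> R -> R) :
 \sum_(x : {ffun 'I_(n+n) -> A}) F (\sum_(i<n) val (x (lshift n i))) (\sum_(i<n) val (x (rshift n i)))
 = \sum_(u : {ffun 'I_n -> A}) \sum_(v : {ffun 'I_n -> A}) F (ts u) (ts v).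
Proof.
rewrite pair_big (reindex (@join n)) /=; last first.
  by exists (@unj n) => p _; [apply: joinK | apply: unjK].
apply: eq_bigr => -[u v] _ /=; rewrite /ts; congr F; apply: eq_bigr => i _;
  rewrite /join ffunE.
  by rewrite (unsplitK (inl i)).
by rewrite (unsplitK (inr i)).
Qed.

Lemma tsD n (x : {ffun 'I_(n+n) -> A}) :
  ts x = \sum_(i<n) val (x (lshift n i)) + \sum_(i<n) val (x (rshift n i)).
Proof. by rewrite /ts big_split_ord. Qed.

Lemma energyE n : ((energy A n)%:R : R) = \sum_(u : {ffun 'I_n -> A}) cn n (ts u).
Proof.
rewrite /energy card_setR (@split_sum n (fun a b => (a == b)%:R)).
by apply: eq_bigr => u _; apply: eq_bigr => v _; rewrite eq_sym.
Qed.

Lemma cnD n x : cn (n+n) x = \sum_(u : {ffun 'I_n -> A}) \sum_(v : {ffun 'I_n -> A}) (ts u + ts v == x)%:R.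
Proof.
rewrite /cn -(@split_sum n (fun a b => (a + b == x)%:R)).
by apply: eq_bigr => g _; rewrite tsD.
Qed.

Lemma cn_ge1 n (u : {ffun 'I_n -> A}) : 1 <= cn n (ts u).
Proof.
rewrite /cn (bigD1 u) //= eqxx lerDl; apply: sumr_ge0 => v _; exact: ler0n.
Qed.

Lemma cn_ge0 n y : 0 <= cn n y.
Proof. apply: sumr_ge0 => v _; exact: ler0n. Qed.

Lemma key n x : cn (n+n) x <= \sum_(u : {ffun 'I_n -> A}) cn n (ts u).
Proof.
set c := fun u : {ffun 'I_n -> A} => cn n (ts u).
pose w u v := c v / c u.
have amgm u v : 1 <= (w u v + w v u) / 2.
  by apply: amgm_aux; apply: cn_ge1.
have step1 : cn (n+n) x <= \sum_u \sum_v (ts u + ts v == x)%:R * w u v.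
  rewrite cnD.
  apply: (@le_trans _ _ (\sum_u \sum_v (ts u + ts v == x)%:R * ((w u v + w v u) / 2))).
    apply: ler_sum => u _; apply: ler_sum => v _.
    by rewrite -{1}(mulr1 (_%:R)) ler_wpM2l.
  have -> : \sum_u \sum_v (ts u + ts v == x)%:R * ((w u v + w v u) / 2) =
     (\sum_u \sum_v (ts u + ts v == x)%:R * w u v
      + \sum_u \sum_v (ts u + ts v == x)%:R * w v u) / 2.
    rewrite mulrDl !mulr_suml -big_split /=; apply: eq_bigr => u _.
    rewrite !mulr_suml -big_split /=; apply: eq_bigr => v _.
    by rewrite mulrA mulrDr mulrDl.
  rewrite [X in _ + X]exchange_big /=.
  under [X in _ + X]eq_bigr do under eq_bigr do rewrite addrC.
  set X := (\sum_u _)%R; have -> : (X + X) / 2 = X by field.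
  done.
apply: (le_trans step1).
rewrite exchange_big /=; apply: ler_sum => v _.
have -> : \sum_u (ts u + ts v == x)%:R * w u v = c v * (cn n (x - ts v) / cn n (x - ts v)).
  rewrite mulrA /cn mulr_sumr mulr_suml; apply: eq_bigr => u _.
  rewrite /w (eq_sym _ x) -subr_eq eq_sym.
  case: eqP => [e | _]; first by rewrite /c e mul1r mulr1.
  by rewrite !mul0r mulr0 mul0r.
have := cn_ge0 n (x - ts v); set d := cn n (x - ts v) => d0.
rewrite -[X in _ <= X](mulr1 (c v)) ler_wpM2l //; first exact: cn_ge0.
have [->|dn0] := eqVneq d 0; first by rewrite mul0r ler01.
by rewrite mulfV.
Qed.

Lemma sum_eq_le1 (a : R) (l : seq R) : uniq l -> \sum_(y <- l) ((a == y)%:R : R) <= 1.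
Proof.
elim: l => [|y l IH] /=; first by rewrite big_nil ler01.
case/andP=> yl ul; rewrite big_cons.
have [e|ne] := eqVneq a y.
  rewrite big1_seq ?addr0 // => z /andP[_ zl].
  by rewrite -e in yl; case: eqP zl yl => // ->  ->.
by rewrite add0r IH.
Qed.

Lemma mainlem t (nu delta : R) : 1 <= nu -> 0 < delta -> A != fset0 ->
  (energy A (t+t))%:R = (#|` A|%:R) `^ (2 * (t+t)%:R - nu) ->
  (energy A t)%:R <= (#|` A|%:R) `^ ((t+t)%:R - nu + delta) ->
  exists G : {set {ffun 'I_(t+t) -> A}},
    (#|` A|%:R) `^ ((t+t)%:R - delta) / 2 < #|G|%:R /\
    (#|` sumset G|%:R : R) <= 4 * (#|` A|%:R) `^ nu.
Proof.
move=> nu1 d0 A0 HEs HEt.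
set N : R := #|` A|%:R in HEs HEt *.
have N1 : 1 <= N by rewrite /N ler1n lt0n cardfs_eq0.
have N0 : 0 < N by apply: lt_le_trans N1.
have NN0 : N != 0 by rewrite gt_eqF.
have powD a b : N `^ (a + b) = N `^ a * N `^ b by rewrite powRD // NN0 implybT.
set s := (t + t)%N in HEs HEt *.
have M : \sum_(g : {ffun 'I_s -> A}) (1:R) = N ^+ s.
  by rewrite sumr_const card_ffun card_ord cardA natrX.
set tau := N `^ (s%:R - nu) / 4.
have tau0 : 0 < tau by rewrite divr_gt0 ?powR_gt0.
set e : R := (energy A t)%:R in HEt.
pose G := [set g : {ffun 'I_s -> A} | tau <= cn s (ts g)].
exists G.
have claim1 : N `^ (2 * s%:R - nu) <= #|G|%:R * e + tau * N ^+ s.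
  rewrite -HEs energyE (bigID (fun g => g \in G)) /=; apply: lerD.
    apply: (@le_trans _ _ (\sum_(g in G) e)).
      apply: ler_sum => g _; rewrite /e energyE; exact: key.
    by rewrite sumr_const mulr_natl.
  rewrite -M mulr_sumr.
  rewrite [X in _ <= X](bigID (fun g => g \in G)) /=; apply: ler_wpDl.
    by apply: sumr_ge0 => g _; rewrite mulr1 ltW.
  apply: ler_sum => g; rewrite inE => /negP; rewrite mulr1 => h.
  by rewrite ltW // ltNge; apply/negP.
have claim2 : #|` sumset G|%:R * tau <= N ^+ s.
  rewrite card_fset_sum1 natr_sum mulr_suml.
  apply: (@le_trans _ _ (\sum_(y <- sumset G) cn s y)).
    rewrite big_seq [X in _ <= X]big_seq; apply: ler_sum => y /imfsetP [g gG ->].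
    by rewrite mul1r; move: gG; rewrite inE.
  rewrite /cn exchange_big /= -M; apply: ler_sum => g _.
  exact: sum_eq_le1 (fset_uniq _).
set P := N `^ (s%:R - delta).
set Q := N `^ (s%:R - nu + delta).
have P0 : 0 < P by rewrite powR_gt0.
have Q0 : 0 < Q by rewrite powR_gt0.
have PQ : N `^ (2 * s%:R - nu) = P * Q by rewrite -powD; congr (N `^ _); ring.
have tauM : tau * N ^+ s = P * Q / 4.
  rewrite -PQ -(powR_mulrn _ (ltW N0)) /tau mulrAC -powD; congr (N `^ _ / 4); ring.
have hg : 3 / 4 * P <= #|G|%:R.
  rewrite -(ler_pM2r Q0); apply: (le_trans _ (ler_wpM2l (ler0n _ _) HEt)).
  have -> : 3 / 4 * P * Q = P * Q - P * Q / 4 by field.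
  by rewrite lerBlDr -tauM -PQ.
split.
  apply: lt_le_trans hg; rewrite -subr_gt0.
  have -> : 3 / 4 * P - P / 2 = P / 4 by field.
  by rewrite divr_gt0.
have Nnu : N ^+ s = N `^ (s%:R - nu) * N `^ nu.
  by rewrite -(powR_mulrn _ (ltW N0)) -powD; congr (N `^ _); ring.
move: claim2; rewrite Nnu /tau.
set a := N `^ (s%:R - nu); have a0 : 0 < a by rewrite powR_gt0.
move=> h; rewrite -(ler_pM2r a0) -(ler_pM2r (_ : 0 < 4^-1)) ?invr_gt0 //.
apply: (le_trans _ (le_trans h _)); first by rewrite mulrA.
by rewrite le_eqVlt; apply/orP; left; apply/eqP; field.
Qed.
End S.

Unset Implicit Arguments. Set Strict Implicit.

Theorem lemma8p1 (R : realType) (nu delta : R) (s : nat) (A : {fset R}) :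
  1 <= nu -> 0 < delta -> (4 <= s)%N -> ~~ odd s -> A != fset0 ->
  (energy A s)%:R = (#|` A|%:R) `^ (2 * s%:R - nu) ->
  (energy A s./2)%:R <= (#|` A|%:R) `^ (s%:R - nu + delta) ->
  exists G : {set {ffun 'I_s -> A}},
    (#|` A|%:R) `^ (s%:R - delta) / 2 < #|G|%:R /\
    (#|` sumset G|%:R : R) <= 4 * (#|` A|%:R) `^ nu.
Proof.
move=> nu1 d0 s4 ev A0 HEs HEt.
have hs : s = (s./2 + s./2)%N by rewrite addnn even_halfK.
move: HEt hs; set t := s./2 => HEt hs; clearbody t; subst s.
exact: mainlem.
Qed.
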